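(* Let $q\ge2$ be a prime power, let $2\le k<n$, and let $D$ be a $(k-1)$-$(n,k,1)_q$-design. Let $C$ be the set of all $(k+1)$-dimensional subspaces $U$ of $\mathbb{F}_q^n$ such that no element of $D$ is contained in $U$. If $C$ and its complement in the vertex set of $J_q(n,k+1)$ are both nonempty, then $C$ is a completely regular code in the Grassmann graph $J_q(n,k+1)$ with covering radius $1$.
   Context: The Grassmann graph $J_q(n,k)$ has as vertices the $k$-dimensional subspaces of $\mathbb{F}_q^n$, adjacent iff they meet in a $(k-1)$-dimensional subspace. A $t$-$(n,k,\lambda)_q$-design is a set $D$ of $k$-dimensional subspaces of $\mathbb{F}_q^n$ (without repetition) such that every $t$-dimensional subspace of $\mathbb{F}_q^n$ is contained in exactly $\lambda$ elements of $D$. A nonempty vertex set $C$ of a regular graph is a completely regular code with covering radius $1$ if every vertex is in $C$ or adjacent to $C$, not all vertices are in $C$, and there are numbers $\beta_0,\gamma_1$ such that every vertex of $C$ has exactly $\beta_0$ neighbours outside $C$ and every vertex outside $C$ has exactly $\gamma_1$ neighbours in $C$. *)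

(* Defs.v *)
From HB Require Import structures.
From mathcomp Require Import all_boot all_order all_algebra.
Unset Printing Implicit Defensive.
Import GRing.Theory.
Local Open Scope ring_scope.

Import VectorInternalTheory.
Section SubspaceFinite.
Variables (F : finFieldType) (n : nat).
HB.instance Definition _ := [Countable of {vspace 'rV[F]_n} by <:].
HB.instance Definition _ := [Finite of {vspace 'rV[F]_n} by <:].
End SubspaceFinite.

Definition grass_verts (F : finFieldType) (n k : nat) : {set {vspace 'rV[F]_n}} :=
  [set U : {vspace 'rV[F]_n} | \dim U == k].

Definition grass_adj (F : finFieldType) (n k : nat) (U W : {vspace 'rV[F]_n}) : bool :=
  (\dim (U :&: W)%VS == k.-1)%N.

Definition is_design (F : finFieldType) (n t k lam : nat)
    (D : {set {vspace 'rV[F]_n}}) : Prop :=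
  D \subset grass_verts F n k /\
  forall T : {vspace 'rV[F]_n}, \dim T = t ->
    #|[set B in D | (T <= B)%VS]| = lam.

Definition crc_radius1 {T : finType} (V : {set T}) (adj : rel T) (C : {set T}) : Prop :=
  [/\ C != set0, C \subset V,
      (forall x, x \in V -> x \in C \/ exists2 y, y \in C & adj x y),
      ~~ (V \subset C) &
      exists beta0 gamma1 : nat,
        (forall x, x \in C -> #|[set y in V :\: C | adj x y]| = beta0) /\
        (forall x, x \in V :\: C -> #|[set y in C | adj x y]| = gamma1)].

(* Main.v *)
Require Import Defs.
From HB Require Import structures.
From mathcomp Require Import all_boot all_order all_algebra.
From mathcomp Require Import zify.
Import GRing.Theory.


Section Gen.
Variables (K : fieldType) (vT : vectType K).
Implicit Types (U W X Y A B T : {vspace vT}).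

Lemma sub_dim_eq U W : (U <= W)%VS -> (\dim W <= \dim U)%N -> U = W.
Proof. by move=> sUW le; apply/eqP; rewrite eqEdim sUW le. Qed.

Lemma hyp_meet U W Y m : (U <= Y)%VS -> (W <= Y)%VS -> \dim U = m -> \dim W = m ->
  \dim Y = m.+1 -> U != W -> \dim (U :&: W) = m.-1 /\ (U + W)%VS = Y.
Proof.
move=> sUY sWY dU dW dY nUW.
have sUWY : (U + W <= Y)%VS by rewrite subv_add sUY sWY.
have le1 : (m <= \dim (U + W))%N by rewrite -dU dimvS // addvSl.
have le2 : (\dim (U + W) <= m.+1)%N by rewrite -dY dimvS.
have ne : \dim (U + W) != m.
  apply: contra nUW => /eqP e.
  have e1 : U = (U + W)%VS by apply: sub_dim_eq; rewrite ?addvSl // e dU.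
  have e2 : W = (U + W)%VS by apply: sub_dim_eq; rewrite ?addvSr // e dW.
  by rewrite -e2 in e1; rewrite e1.
have dS : \dim (U + W) = m.+1 by apply/eqP; rewrite eqn_leq le2 ltn_neqAle eq_sym ne le1.
split; last by apply: sub_dim_eq => //; rewrite dS dY.
have := dimv_sum_cap U W; rewrite dS dU dW; lia.
Qed.

Lemma cap_small T B X m : (T <= B)%VS -> (T <= X)%VS -> \dim T = m -> \dim B = m.+1 ->
  ~~ (B <= X)%VS -> (B :&: X)%VS = T.
Proof.
move=> sTB sTX dT dB nBX.
have sT : (T <= B :&: X)%VS by rewrite subv_cap sTB sTX.
have le1 : (\dim (B :&: X) <= m.+1)%N by rewrite -dB dimvS // capvSl.
have ne : \dim (B :&: X) != m.+1.
  apply: contra nBX => /eqP e.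
  have : (B :&: X)%VS = B by apply: sub_dim_eq; rewrite ?capvSl // e dB.
  by move/capv_idPl.
apply/esym/sub_dim_eq => //; rewrite dT; lia.
Qed.

Lemma exists_sub U m : (m <= \dim U)%N -> exists W, (W <= U)%VS /\ \dim W = m.
Proof.
move=> le; set e := vbasis U.
have fe : free e by exact: basis_free (vbasisP U).
have se : size e = \dim U by rewrite size_tuple.
exists <<take m e>>%VS; split.
  apply/span_subvP => v /mem_take; exact: vbasis_mem.
have : free (take m e) by apply: (@catl_free _ _ (drop m e)); rewrite cat_take_drop.
by move/eqnP => ->; rewrite size_take se; case: ltnP => // h; apply/eqP; rewrite eqn_leq le h.
Qed.


Lemma dim_diff X A : (A <= X)%VS -> \dim (X :\: A) = (\dim X - \dim A)%N.
Proof.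
move=> sAX; have := dimv_cap_compl X A; rewrite (capv_idPr sAX); lia.
Qed.

Lemma adapted_basis A X : (A <= X)%VS ->
  basis_of X (vbasis A ++ vbasis (X :\: A)) /\
  basis_of fullv (vbasis A ++ vbasis (X :\: A) ++ vbasis (fullv :\: X)).
Proof.
move=> sAX.
have eX : (A + (X :\: A))%VS = X.
  by rewrite addvC -[in RHS](addv_diff_cap X A) (capv_idPr sAX).
have b12 : basis_of X (vbasis A ++ vbasis (X :\: A)).
  rewrite -{1}eX; apply: cat_basis; try exact: vbasisP.
  by apply/directv_addP; rewrite capvC capv_diff.
have eF : (X + (fullv :\: X))%VS = fullv.
  by rewrite addvC -[in RHS](addv_diff_cap fullv X) capfv.
split; first exact: b12.
rewrite catA -{1}eF; apply: cat_basis; try exact: vbasisP; try exact: b12.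
by apply/directv_addP; rewrite capvC capv_diff.
Qed.

Lemma transport A X A' X' : (A <= X)%VS -> (A' <= X')%VS ->
  \dim A = \dim A' -> \dim X = \dim X' ->
  exists f : 'End(vT), [/\ lker f == 0%VS, (f @: A)%VS = A' & (f @: X)%VS = X'].
Proof.
move=> sAX sAX' dA dX.
have [b12 b] := adapted_basis _ _ sAX; have [b12' b'] := adapted_basis _ _ sAX'.
set e1 := vbasis A in b12 b; set e2 := vbasis (X :\: A) in b12 b; set e3 := vbasis (fullv :\: X) in b.
set e1' := vbasis A' in b12' b'; set e2' := vbasis (X' :\: A') in b12' b'; set e3' := vbasis (fullv :\: X') in b'.
have s1 : size e1 = size e1' by rewrite !size_tuple.
have s2 : size e2 = size e2' by rewrite !size_tuple !dim_diff // dA dX.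
have s3 : size e3 = size e3' by rewrite !size_tuple !dim_diff ?subvf // dX.
have [g Hg] := linear_of_free (e1 ++ e2 ++ e3) (e1' ++ e2' ++ e3').
have sz : size (e1' ++ e2' ++ e3') = size (e1 ++ e2 ++ e3) by rewrite !size_cat s1 s2 s3.
have mg := Hg (basis_free b) sz.
pose f : 'End(vT) := linfun g.
have mf : map f (e1 ++ e2 ++ e3) = e1' ++ e2' ++ e3'.
  by rewrite -mg; apply: eq_map => v; rewrite lfunE.
move: mf; rewrite !map_cat => /eqP.
rewrite eqseq_cat ?size_map // eqseq_cat ?size_map // => /and3P[/eqP m1 /eqP m2 /eqP m3].
have imF : limg f = fullv.
  by rewrite -{1}(span_basis b) limg_span !map_cat m1 m2 m3 (span_basis b').
exists f; split.
- have := limg_ker_dim f fullv; rewrite capfv imF => /eqP.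
  by rewrite -{2}(add0n (\dim fullv)) eqn_add2r dimv_eq0.
- by rewrite -(span_basis (vbasisP A)) limg_span m1 (span_basis (vbasisP A')).
- by rewrite -(span_basis b12) limg_span map_cat m1 m2 (span_basis b12').
Qed.

Lemma limg_surj (f : 'End(vT)) : lker f == 0%VS -> forall W, exists U, W = (f @: U)%VS.
Proof.
move=> kf W; exists (f^-1 @: W)%VS; by rewrite -limg_comp lker0_compfV // lim1g.
Qed.

End Gen.
Arguments sub_dim_eq {K vT U W}.
Arguments hyp_meet {K vT U W Y m}.
Arguments cap_small {K vT T B X m}.

Lemma card_transport (T : finType) (g : T -> T) (P Q : pred T) :
  injective g -> (forall z, exists y, z = g y) -> (forall y, Q (g y) = P y) ->
  #|[set y | Q y]| = #|[set y | P y]|.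
Proof.
move=> ginj gsurj gQ.
have -> : [set y | Q y] = g @: [set y | P y].
  apply/setP => z; have [y ->] := gsurj z.
  by rewrite mem_imset // !inE gQ.
by rewrite card_imset.
Qed.

Section Pres.
Variables (K : fieldType) (vT : vectType K) (f : 'End(vT)).
Hypothesis kf : lker f == 0%VS.
Implicit Types (U W : {vspace vT}).
Lemma pdim U : \dim (f @: U)%VS = \dim U.
Proof. by apply: limg_dim_eq; rewrite (eqP kf) capv0. Qed.
Lemma pcap U W : (f @: (U :&: W))%VS = (f @: U :&: f @: W)%VS.
Proof. exact: lker0_img_cap. Qed.
Lemma psub U W : ((f @: U) <= (f @: W))%VS = (U <= W)%VS.
Proof. exact: limg_ker0. Qed.
Lemma peq U W : ((f @: U)%VS == (f @: W)%VS) = (U == W).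
Proof. exact: eq_limg_ker0. Qed.
Lemma pinj : injective (fun U => (f @: U)%VS).
Proof. by move=> U W /eqP; rewrite peq => /eqP. Qed.
End Pres.
Arguments pdim {K vT f} kf U.
Arguments pcap {K vT f} kf U W.
Arguments psub {K vT f} kf U W.
Arguments peq {K vT f} kf U W.
Arguments pinj {K vT f} kf.
Arguments limg_surj {K vT f}.
Arguments transport {K vT A X A' X'}.

Section Main.
Variables (F : finFieldType) (n k : nat).
Hypotheses (hk : (2 <= k)%N) (hkn : (k < n)%N).
Variable D : {set {vspace 'rV[F]_n}}.
Hypothesis hD : is_design F n k.-1 k 1 D.

Local Notation vs := {vspace 'rV[F]_n}.
Local Notation V := (grass_verts F n k.+1).
Local Notation C := [set U in grass_verts F n k.+1 | [forall B in D, ~~ (B <= U)%VS]].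
Local Notation adj := (grass_adj F n k.+1).
Implicit Types (x y T B U W : vs).

Lemma hk1 : k.-1.+1 = k.
Proof. lia. Qed.

Lemma dimD B : B \in D -> \dim B = k.
Proof. by case: hD => sub _ BD; have := subsetP sub _ BD; rewrite inE => /eqP. Qed.

Lemma blk_uniq T B B' : \dim T = k.-1 -> B \in D -> B' \in D ->
  (T <= B)%VS -> (T <= B')%VS -> B = B'.
Proof.
case: hD => _ h dT BD B'D sB sB'.
have /eqP/cards1P[B0 e] := h T dT.
have : B \in [set B0] by rewrite -e inE BD sB.
have : B' \in [set B0] by rewrite -e inE B'D sB'.
by rewrite !inE => /eqP -> /eqP ->.
Qed.

Lemma blk_ex T : \dim T = k.-1 -> exists2 B, B \in D & (T <= B)%VS.
Proof.
case: hD => _ h dT; have := h T dT.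
move/eqP; rewrite eqn_leq => /andP[_]; rewrite card_gt0 => /set0Pn[B].
by rewrite inE => /andP[BD sB]; exists B.
Qed.

Definition blk T := odflt 0%VS [pick B in D | (T <= B)%VS].

Lemma blkP T : \dim T = k.-1 -> blk T \in D /\ (T <= blk T)%VS.
Proof.
move=> dT; rewrite /blk; case: pickP => [B /andP[]|none] //=.
by have [B BD sB] := blk_ex _ dT; have := none B; rewrite BD sB.
Qed.

Lemma blk_eq T B : \dim T = k.-1 -> B \in D -> (T <= B)%VS -> blk T = B.
Proof.
move=> dT BD sB; have [bD sb] := blkP _ dT; exact: (blk_uniq _ _ _ dT bD BD sb sB).
Qed.

Lemma one_block y B B' : \dim y = k.+1 -> B \in D -> B' \in D ->
  (B <= y)%VS -> (B' <= y)%VS -> B = B'.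
Proof.
move=> dy BD B'D sB sB'; case: (eqVneq B B') => // ne.
have [dc _] := hyp_meet sB sB' (dimD _ BD) (dimD _ B'D) dy ne.
exact: (blk_uniq _ _ _ dc BD B'D (capvSl _ _) (capvSr _ _)).
Qed.

Lemma notC y : y \in V -> (y \notin C) = [exists B in D, (B <= y)%VS].
Proof.
move=> yV; rewrite inE yV /= negb_forall_in; apply: eq_existsb => B.
by rewrite negbK.
Qed.


Definition Ycond x y := [&& y \in V, y \notin C, adj x y &
  [forall B in D, (B <= x)%VS ==> ~~ (B <= y)%VS]].
Definition Pcond x (p : vs * vs) := [&& \dim p.1 == k.-1, \dim p.2 == k,
  (p.1 <= p.2)%VS, (p.2 <= x)%VS & [forall B in D, (B <= x)%VS ==> ~~ (p.1 <= B)%VS]].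
Definition phi (p : vs * vs) := (blk p.1 + p.2)%VS.

Lemma phi_good x p : x \in V -> Pcond x p ->
  [/\ Ycond x (phi p), (x :&: phi p)%VS = p.2 & (blk p.1 :&: x)%VS = p.1].
Proof.
case: p => T K; rewrite inE => /eqP dx /and5P[/eqP /= dT /eqP /= dK /= sTK sKx /forall_inP hall].
have [BD sTB] := blkP _ dT; set B := blk T in BD sTB *.
have nBx : ~~ (B <= x)%VS.
  by apply/negP => sBx; have := hall B BD; rewrite sBx sTB.
have nBK : ~~ (B <= K)%VS by apply: contra nBx => sBK; exact: subv_trans sBK sKx.
have dB : \dim B = k.-1.+1 by rewrite hk1 dimD.
have cBK : (B :&: K)%VS = T := cap_small sTB sTK dT dB nBK.
have dy : \dim (B + K) = k.+1.
  have := dimv_sum_cap B K; rewrite cBK dT dK dB hk1; lia.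
have sKc : (K <= x :&: (B + K))%VS by rewrite subv_cap sKx addvSr.
have dc : \dim (x :&: (B + K)) <= k.+1 by rewrite -dy dimvS // capvSr.
have nc : \dim (x :&: (B + K)) != k.+1.
  apply/eqP => e; have : (x :&: (B + K))%VS = (B + K)%VS.
    by apply: sub_dim_eq; rewrite ?capvSr // e dy.
  move/capv_idPr => syx.
  move/negP: nBx; apply.
  exact: (subv_trans (addvSl B K) syx).
have cK : (x :&: (B + K))%VS = K.
  by apply/esym/sub_dim_eq => //; move: dc nc; rewrite dK; lia.
split=> //=; last first.
  exact: (cap_small sTB (subv_trans sTK sKx) dT dB nBx).
rewrite /Ycond /phi /= inE dy eqxx /= notC ?inE ?dy //=.
apply/and3P; split.
- by apply/existsP; exists B; rewrite BD addvSl.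
- by rewrite /grass_adj cK dK.
- apply/forall_inP => B' B'D; apply/implyP => sB'x; apply/negP => sB'y.
  have e := one_block _ _ _ dy B'D BD sB'y (addvSl _ _).
  by move: nBx; rewrite -e sB'x.
Qed.


Lemma phi_surj x y : x \in V -> Ycond x y -> exists2 p, Pcond x p & y = phi p.
Proof.
move=> xV /and4P[yV ynC axy /forall_inP hall].
move: (ynC); rewrite notC // => /exists_inP[B BD sBy].
have nBx : ~~ (B <= x)%VS by apply/negP => sBx; have := hall B BD; rewrite sBx sBy.
move: yV; rewrite inE => /eqP dy.
move: axy; rewrite /grass_adj /= => /eqP dK.
set K := (x :&: y)%VS in dK.
have ne : B != K by apply: contra nBx => /eqP ->; exact: capvSl.
have [dT eY] := hyp_meet sBy (capvSr x y) (dimD _ BD) dK dy ne.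
exists ((B :&: K)%VS, K).
  rewrite /Pcond /= dT dK !eqxx capvSr capvSl /=.
  apply/forall_inP => B' B'D; apply/implyP => sB'x; apply/negP => sTB'.
  have e := blk_uniq _ _ _ dT BD B'D (capvSl _ _) sTB'.
  by move: nBx; rewrite e sB'x.
by rewrite /phi /= (blk_eq _ _ dT BD (capvSl _ _)) eY.
Qed.

Lemma bij x : x \in V -> #|[set y | Ycond x y]| = #|[set p | Pcond x p]|.
Proof.
move=> xV.
have -> : [set y | Ycond x y] = phi @: [set p | Pcond x p].
  apply/setP => y; rewrite inE; apply/idP/imsetP.
    by move/(phi_surj _ _ xV) => [p pP ->]; exists p; rewrite ?inE.
  by move=> [p]; rewrite inE => pP ->; have [] := phi_good _ _ xV pP.
apply: card_in_imset => p p'; rewrite !inE => pP p'P e.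
have [_ c1 b1] := phi_good _ _ xV pP; have [_ c2 b2] := phi_good _ _ xV p'P.
have e2 : p.2 = p'.2 by rewrite -c1 -c2 e.
have e1 : blk p.1 = blk p'.1.
  have /and5P[/eqP d1 _ _ _ _] := pP; have /and5P[/eqP d1' _ _ _ _] := p'P.
  have [B1D _] := blkP _ d1; have [B2D _] := blkP _ d1'.
  have [yV _ _ _] := and4P (let: And3 h _ _ := phi_good _ _ xV pP in h).
  move: yV; rewrite inE => /eqP dy.
  apply: (one_block _ _ _ dy B1D B2D (addvSl _ _)).
  by rewrite e addvSl.
have e1' : p.1 = p'.1 by rewrite -b1 -b2 e1.
by case: p p' e1' e2 {pP p'P c1 b1 c2 b2 e e1} => [a b] [a' b'] /= -> ->.
Qed.


Definition flagsB R x := #|[set p : vs * vs | [&& \dim p.1 == k.-1, \dim p.2 == k,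
  (p.1 <= p.2)%VS, (p.2 <= x)%VS & ~~ (p.1 <= R)%VS]]|.
Definition Ncount x := #|[set y : vs | (\dim y == k.+1) && (\dim (x :&: y) == k)]|.
Definition Acount R x := #|[set y : vs | [&& \dim y == k.+1, y != x & (R <= y)%VS]]|.

Lemma invariance (f : 'End('rV[F]_n)) R x : lker f == 0%VS ->
  [/\ flagsB (f @: R) (f @: x) = flagsB R x, Ncount (f @: x) = Ncount x &
      Acount (f @: R) (f @: x) = Acount R x].
Proof.
move=> kf; have inj := pinj kf; have surj := limg_surj kf.
split.
- apply: (@card_transport _ (fun p : vs * vs => ((f @: p.1)%VS, (f @: p.2)%VS))).
  + by move=> [a b] [c d] /= [/inj -> /inj ->].
  + by move=> [a b]; have [a' ->] := surj a; have [b' ->] := surj b; exists (a', b').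
  + by move=> [a b] /=; rewrite !pdim // !psub.
- apply: (@card_transport _ (fun U => (f @: U)%VS)) => //.
  by move=> y; rewrite -pcap // !pdim.
- apply: (@card_transport _ (fun U => (f @: U)%VS)) => //.
  by move=> y; rewrite pdim // peq // psub.
Qed.

Lemma counts_eq R x R' x' : (R <= x)%VS -> (R' <= x')%VS ->
  \dim R = \dim R' -> \dim x = \dim x' ->
  [/\ flagsB R x = flagsB R' x', Ncount x = Ncount x' & Acount R x = Acount R' x'].
Proof.
move=> s s' dR dx; have [f [kf <- <-]] := transport s s' dR dx.
by have [-> -> ->] := invariance f R x kf.
Qed.


Lemma beta_count x : x \in C -> #|[set y in V :\: C | adj x y]| = flagsB 0%VS x.
Proof.
move=> xC; have xV : x \in V by move: xC; rewrite inE => /andP[].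
have hx : forall B, B \in D -> ~~ (B <= x)%VS.
  by move: xC; rewrite inE => /andP[_ /forall_inP].
transitivity #|[set y | Ycond x y]|.
  apply: eq_card => y; rewrite [in RHS]in_set [in LHS]in_set in_setD.
  apply/idP/idP => [/andP[/andP[ynC yV] a] | /and4P[yV ynC a _]].
    rewrite /Ycond yV ynC a /=; apply/forall_inP => B BD.
    by rewrite (negbTE (hx B BD)).
  by rewrite yV ynC a.
rewrite bij //; rewrite /flagsB; apply: eq_card => p; rewrite !in_set /Pcond.
case/boolP: (\dim p.1 == k.-1) => //= d.
have -> : [forall B in D, (B <= x)%VS ==> ~~ (p.1 <= B)%VS].
  by apply/forall_inP => B BD; rewrite (negbTE (hx B BD)).
have -> : ~~ (p.1 <= 0)%VS by rewrite subv0 -dimv_eq0 (eqP d); lia.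
done.
Qed.

Lemma gamma_count x B0 : x \in V -> B0 \in D -> (B0 <= x)%VS ->
  #|[set y in C | adj x y]| = (Ncount x - (Acount B0 x + flagsB B0 x))%N.
Proof.
move=> xV B0D sB0x; have dx : \dim x = k.+1 by move: xV; rewrite inE => /eqP.
set N := [set y : vs | (\dim y == k.+1) && (\dim (x :&: y) == k)].
have eN : Ncount x = #|N| by [].
have := cardsID C N; have := cardsID [set y : vs | (B0 <= y)%VS] (N :\: C).
have -> : N :&: C = [set y in C | adj x y].
  apply/setP => y; rewrite !in_set /grass_adj /=.
  case: (\dim (x :&: y) == k); rewrite ?andbF ?andbT //.
  by case: (\dim y == k.+1).
have -> : (N :\: C) :&: [set y | (B0 <= y)%VS] =
          [set y : vs | [&& \dim y == k.+1, y != x & (B0 <= y)%VS]].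
  apply/setP => y; rewrite !in_set.
  case/boolP: (\dim y == k.+1) => dy; last by rewrite !andbF.
  case/boolP: (B0 <= y)%VS => sB0y; rewrite ?andbF ?andbT //=.
  have yV : y \in V by rewrite inE.
  have -> : [forall B in D, ~~ (B <= y)%VS] = false.
    by apply/negbTE; rewrite negb_forall_in; apply/exists_inP; exists B0; rewrite ?negbK.
  rewrite /=; apply/idP/idP => [/eqP dc | nyx].
    by apply/eqP => eyx; move: dc; rewrite eyx capvv dx; lia.
  have sc : (B0 <= x :&: y)%VS by rewrite subv_cap sB0x.
  have ge : (k <= \dim (x :&: y))%N by rewrite -(dimD _ B0D) dimvS.
  have le : (\dim (x :&: y) <= k.+1)%N by rewrite -dx dimvS // capvSl.
  apply/eqP; apply/eqP; rewrite eqn_leq ge andbT -ltnS ltn_neqAle le andbT.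
  apply: contra nyx => /eqP e.
  have e1 : (x :&: y)%VS = x by apply: sub_dim_eq; rewrite ?capvSl // e dx.
  have e2 : (x :&: y)%VS = y by apply: sub_dim_eq; rewrite ?capvSr // e (eqP dy).
  by rewrite -e2 e1.
have -> : #|(N :\: C) :\: [set y | (B0 <= y)%VS]| = flagsB B0 x.
  transitivity #|[set y | Ycond x y]|.
    apply: eq_card => y; rewrite [in RHS]in_set; apply/idP/idP.
      rewrite !in_setD => /andP[nB0y /andP[ynC yN]].
      move: yN; rewrite in_set => /andP[dy da].
      apply/and4P; split => //; first by rewrite inE.
      apply/forall_inP => B BD; apply/implyP => sBx.
      have -> : B = B0 by apply: (one_block _ _ _ dx BD B0D sBx sB0x).
      by rewrite inE in nB0y.
    move/and4P => [yV ynC da /forall_inP fa].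
    have nB0y : ~~ (B0 <= y)%VS by have := fa B0 B0D; rewrite sB0x.
    rewrite !in_setD ynC in_set nB0y /= in_set; rewrite inE in yV; rewrite yV /=; exact: da.
  rewrite bij //; apply: eq_card => p; rewrite [in RHS]in_set [in LHS]in_set.
  rewrite /Pcond; apply/and5P/and5P => [] [d1 d2 s1 s2 h]; split => //.
    by move/forall_inP: h => h; have := h B0 B0D; rewrite sB0x.
  apply/forall_inP => B BD; apply/implyP => sBx.
  by have -> : B = B0 by apply: (one_block _ _ _ dx BD B0D sBx sB0x).
move=> h1 h2; rewrite eN -h2 -h1 /Acount addnK //.
Qed.

End Main.

Local Open Scope ring_scope.

Theorem theorem4p2 (F : finFieldType) (n k : nat)
  (hk : (2 <= k)%N) (hkn : (k < n)%N)
  (D : {set {vspace 'rV[F]_n}})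
  (hD : is_design F n k.-1 k 1 D) :
  let C := [set U in grass_verts F n k.+1 | [forall B in D, ~~ (B <= U)%VS]] in
  C != set0 -> grass_verts F n k.+1 :\: C != set0 ->
  crc_radius1 (grass_verts F n k.+1) (grass_adj F n k.+1) C.
Proof.
move=> C; rewrite {}/C => CN0 VC0.
have [c0 c0C] := set0Pn _ CN0.
have [x0 x0VC] := set0Pn _ VC0.
move: (x0VC); rewrite in_setD => /andP[x0nC x0V].
move: (x0nC); rewrite notC // => /exists_inP[B00 B00D sB00].
have c0V : c0 \in grass_verts F n k.+1 by move: c0C; rewrite inE => /andP[].
have dc0 : \dim c0 = k.+1 by move: c0V; rewrite inE => /eqP.
have dx0 : \dim x0 = k.+1 by move: x0V; rewrite inE => /eqP.
have hbeta : forall x, x \in [set U in grass_verts F n k.+1 | [forall B in D, ~~ (B <= U)%VS]] ->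
    #|[set y in grass_verts F n k.+1 :\: [set U in grass_verts F n k.+1 | [forall B in D, ~~ (B <= U)%VS]]
       | grass_adj F n k.+1 x y]| = flagsB F n k 0 c0.
  move=> x xC; rewrite beta_count //.
  have xV : x \in grass_verts F n k.+1 by move: xC; rewrite inE => /andP[].
  have dx : \dim x = k.+1 by move: xV; rewrite inE => /eqP.
  by have [-> _ _] := counts_eq F n k 0 x 0 c0 (sub0v _) (sub0v _) erefl (etrans dx (esym dc0)).
have hgamma : forall x, x \in grass_verts F n k.+1 :\: [set U in grass_verts F n k.+1 | [forall B in D, ~~ (B <= U)%VS]] ->
    #|[set y in [set U in grass_verts F n k.+1 | [forall B in D, ~~ (B <= U)%VS]] | grass_adj F n k.+1 x y]|
    = (Ncount F n k x0 - (Acount F n k B00 x0 + flagsB F n k B00 x0))%N.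
  move=> x; rewrite in_setD => /andP[xnC xV].
  move: (xnC); rewrite notC // => /exists_inP[B BD sB].
  rewrite (gamma_count _ _ _ hk hkn D hD x B) //.
  have dx : \dim x = k.+1 by move: xV; rewrite inE => /eqP.
  have [e1 e2 e3] := counts_eq F n k B x B00 x0 sB sB00
    (etrans (dimD _ _ _ _ hD _ BD) (esym (dimD _ _ _ _ hD _ B00D)))
    (etrans dx (esym dx0)).
  by rewrite e1 e2 e3.
split => //.
- by apply/subsetP => y; rewrite inE => /andP[].
- move=> x xV; case/boolP: (x \in [set U in grass_verts F n k.+1 | [forall B in D, ~~ (B <= U)%VS]]) => xC; first by left.
  right.
  have fpos : (0 < flagsB F n k 0 c0)%N.
    have lek : (k <= \dim c0)%N by rewrite dc0.
    have [K [sK dK]] := exists_sub _ _ _ _ lek.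
    have lek' : (k.-1 <= \dim K)%N by rewrite dK leq_pred.
    have [T [sT dT]] := exists_sub _ _ _ _ lek'.
    rewrite /flagsB card_gt0; apply/set0Pn; exists (T, K).
    rewrite in_set -[(T, K).1]/T -[(T, K).2]/K.
    have hk0 : (k.-1 != 0)%N by rewrite -lt0n -ltnS prednK // ltnW.
    apply/and5P; split; [exact/eqP | exact/eqP | exact: sT | exact: sK |].
    by rewrite subv0 -dimv_eq0 dT.
  move: fpos; rewrite -(hbeta c0 c0C) card_gt0 => /set0Pn[y1].
  rewrite inE => /andP[y1VC ay1].
  have gpos : (0 < #|[set y in [set U in grass_verts F n k.+1 | [forall B in D, ~~ (B <= U)%VS]] | grass_adj F n k.+1 y1 y]|)%N.
    rewrite card_gt0; apply/set0Pn; exists c0; rewrite inE c0C /=.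
    by move: ay1; rewrite /grass_adj capvC.
  have xVC : x \in grass_verts F n k.+1 :\: [set U in grass_verts F n k.+1 | [forall B in D, ~~ (B <= U)%VS]].
    by rewrite in_setD xC xV.
  move: gpos; rewrite (hgamma y1 y1VC) -(hgamma x xVC) card_gt0 => /set0Pn[y].
  by rewrite inE => /andP[yC ay]; exists y.
- by rewrite -setD_eq0.
- exists (flagsB F n k 0 c0), (Ncount F n k x0 - (Acount F n k B00 x0 + flagsB F n k B00 x0))%N.
  by split.
Qed.
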